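(* Let $f$ be a diffeomorphism of $M=\mathbb{R}^d/\mathbb{Z}^d$ with an ergodic invariant Borel probability measure $\mu$, and let $A_1\subseteq A_2\subseteq\cdots$ be open sets with $A=\bigcup_mA_m$ $f$-invariant, $\mu(A)=1$, and $\mu(A_m)<1$ for all $m$. For $\varepsilon>0$ let $P_\varepsilon$ be the set of $x\in M$ for which there are infinitely many indices $m_1<m_2<\cdots$ and integers $j_i\ge\varepsilon/(1-\mu(A_{m_i}))$ such that $f^l(x)\in A_{m_i}$ for all $l$ with $-j_i\le l\le j_i$. Then $\mu(P_\varepsilon)\ge1-4\varepsilon$. *)

(* Defs.v *)
From HB Require Import structures.
From mathcomp Require Import all_boot all_order all_algebra.
From mathcomp Require Import all_classical all_reals all_analysis.
Set Implicit Arguments. Unset Strict Implicit. Unset Printing Implicit Defensive.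
Import Order.TTheory GRing.Theory Num.Theory.
Import numFieldNormedType.Exports.
Local Open Scope classical_set_scope.
Local Open Scope ring_scope.

Section Torus0.
Variables (R : realType) (d : nat).

Definition fracr (r : R) : R := r - (Num.floor r)%:~R.
Definition frac (x : 'rV[R]_d) : 'rV[R]_d := map_mx fracr x.

Definition in_fund (x : 'rV[R]_d) : bool :=
  [forall i, (0 <= x ord0 i) && (x ord0 i < 1)].

(** The torus M = R^d / Z^d, each point represented by its unique
    representative in the fundamental domain [0,1)^d. *)
Definition torus := {x : 'rV[R]_d | in_fund x}.

Lemma fracr_itv (r : R) : (0 <= fracr r) && (fracr r < 1).
Proof.
rewrite /fracr subr_ge0 real_floor_le ?num_real //=.
have := real_floorD1_gt (num_real r).
by rewrite intrD ltrBlDl addrC.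
Qed.

Lemma frac_fund x : in_fund (frac x).
Proof. by apply/forallP => i; rewrite mxE fracr_itv. Qed.

Definition proj (x : 'rV[R]_d) : torus := exist _ (frac x) (frac_fund x).

End Torus0.

HB.instance Definition _ (R : realType) (d : nat) :=
  Choice.copy (torus R d) {x : 'rV[R]_d | in_fund x}.
HB.instance Definition _ (R : realType) (d : nat) :=
  isPointed.Build (torus R d) (proj 0).

Section Torus.
Variables (R : realType) (d : nat).
Local Notation torus := (torus R d).
Local Notation proj := (@proj R d).

Definition torus_open (U : set torus) : Prop := open (proj @^-1` U).

Definition torusB : measurableType _ := g_sigma_algebraType torus_open.

(** C^1 maps R^d -> R^d: all directional derivatives exist everywhere
    and depend continuously on the point (equivalent to C^1 in finite
    dimension). *)
Definition C1 (F : 'rV[R]_d -> 'rV[R]_d) : Prop :=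
  continuous F /\
  forall v : 'rV[R]_d, (forall x, derivable F x v) /\ continuous (fun x => 'D_v F x).

Definition C1_torus (h : torus -> torus) : Prop :=
  exists F : 'rV[R]_d -> 'rV[R]_d, C1 F /\ forall x, proj (F x) = h (proj x).

Definition torus_diffeo (f g : torus -> torus) : Prop :=
  cancel f g /\ cancel g f /\ C1_torus f /\ C1_torus g.

Definition iterz (f g : torus -> torus) (l : int) : torus -> torus :=
  match l with
  | Posz n => iter n f
  | Negz n => iter n.+1 g
  end.

Definition invariant_measure (f : torus -> torus)
  (mu : probability torusB R) : Prop :=
  forall A : set torusB, measurable A -> mu (f @^-1` A) = mu A.

Definition ergodic (f : torus -> torus) (mu : probability torusB R) : Prop :=
  forall A : set torusB, measurable A -> f @^-1` A = A ->
    mu A = 0%E \/ mu A = 1%E.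

Definition Peps (f g : torus -> torus) (mu : probability torusB R)
  (A : nat -> set torus) (eps : R) : set torus :=
  [set x | exists ms : nat -> nat, (forall i, (ms i < ms i.+1)%N) /\
     forall i, exists j : nat,
       eps / (1 - fine (mu (A (ms i)))) <= j%:R /\
       forall l : int, - (j%:Z) <= l <= j%:Z -> A (ms i) (iterz f g l x)].

End Torus.

(* Main.v *)
Require Import Defs.
From HB Require Import structures.
From mathcomp Require Import all_boot all_order all_algebra.
From mathcomp Require Import all_classical all_reals all_analysis.
From mathcomp Require Import ring lra zify.
Import Order.TTheory GRing.Theory Num.Theory.
Import numFieldNormedType.Exports.
Set Implicit Arguments. Unset Strict Implicit.
Local Open Scope classical_set_scope.
Local Open Scope ring_scope.

Lemma open_pre (R : realType) (d : nat) (h : torus R d -> torus R d) :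
  C1_torus h -> forall U, torus_open U -> torus_open (h @^-1` U).
Proof.
case=> F [[Fc _] hF] U oU; rewrite /torus_open.
have -> : Defs.proj (R:=R) (d:=d) @^-1` (h @^-1` U) = F @^-1` (Defs.proj (R:=R) (d:=d) @^-1` U).
  by apply/seteqP; split=> x /=; rewrite hF.
have := @open_comp _ _ F _ (fun x _ => Fc x) oU. exact.
Qed.

Lemma open_iter (R : realType) (d : nat) (h : torus R d -> torus R d) :
  C1_torus h -> forall k U, torus_open U -> torus_open (iter k h @^-1` U).
Proof.
move=> hC; elim=> [|k IH] U oU; first by [].
have := IH _ (open_pre hC oU). by [].
Qed.

Lemma open_meas (R : realType) (d : nat) (U : set (torus R d)) :
  torus_open U -> measurable (U : set (torusB R d)).
Proof. move=> oU; exact: sub_sigma_algebra. Qed.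


Unset Implicit Arguments.
Section Main.
Context (R : realType) (d : nat) (f g : torus R d -> torus R d)
  (mu : probability (torusB R d) R) (A : nat -> set (torus R d)).
Hypotheses (hfC : C1_torus f) (hgC : C1_torus g) (fK : cancel f g)
  (hinv : invariant_measure f mu) (hA : forall m, torus_open (A m)).

Lemma inv_f k U : torus_open U -> mu (iter k f @^-1` U) = mu U.
Proof.
elim: k U => [|k IH] U oU; first by [].
have -> : mu (iter k.+1 f @^-1` U) = mu (iter k f @^-1` (f @^-1` U)) by [].
by rewrite IH ?hinv//; [exact: open_meas | exact: open_pre].
Qed.

Lemma inv_g1 U : torus_open U -> mu (g @^-1` U) = mu U.
Proof.
move=> oU; have mg : measurable (g @^-1` U : set (torusB R d)).
  exact: open_meas (open_pre hgC oU).
rewrite -(hinv _ mg); congr (mu _); apply/seteqP; split=> x /=; by rewrite fK.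
Qed.

Lemma inv_g k U : torus_open U -> mu (iter k g @^-1` U) = mu U.
Proof.
elim: k U => [|k IH] U oU; first by [].
have -> : mu (iter k.+1 g @^-1` U) = mu (iter k g @^-1` (g @^-1` U)) by [].
by rewrite IH ?inv_g1//; exact: open_pre.
Qed.

Lemma mu_fin (S : set (torusB R d)) : measurable S ->
  mu S = (fine (mu S))%:E /\ 0 <= fine (mu S) <= 1.
Proof.
move=> mS; have h0 := measure_ge0 mu S; have h1 := probability_le1 mu mS.
have fS : mu S \is a fin_num by rewrite ge0_fin_numE// (le_lt_trans h1) ?ltry.
split; first by rewrite fineK.
by rewrite fine_ge0//= -lee_fin fineK.
Qed.


Definition pre k m := iter k f @^-1` A m `&` iter k g @^-1` A m.
Definition E m j := \bigcap_(k in `I_(j.+1)) pre k m.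

Lemma mf k m : measurable (iter k f @^-1` A m : set (torusB R d)).
Proof. exact: open_meas (@open_iter _ _ f hfC k _ (hA m)). Qed.
Lemma mg k m : measurable (iter k g @^-1` A m : set (torusB R d)).
Proof. exact: open_meas (@open_iter _ _ g hgC k _ (hA m)). Qed.

Lemma E_meas m j : measurable (E m j : set (torusB R d)).
Proof.
apply: bigcap_measurable; first by exists 0%N.
by move=> k _; apply: measurableI; [exact: mf | exact: mg].
Qed.

Lemma muE_ge m j :
  ((1 - 2 * (j.+1)%:R * (1 - fine (mu (A m))))%:E <= mu (E m j))%E.
Proof.
set pA := fine (mu (A m)).
have [hA1 _] := mu_fin _ (open_meas (hA m)).
have mCf k : mu (~` (iter k f @^-1` A m)) = (1 - pA)%:E.
  rewrite probability_setC; last exact: mf.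
  by rewrite inv_f // hA1 EFinB.
have mCg k : mu (~` (iter k g @^-1` A m)) = (1 - pA)%:E.
  rewrite probability_setC; last exact: mg.
  by rewrite inv_g // hA1 EFinB.
have hC : ~` E m j = \bigcup_(k < j.+1)
   (~` (iter k f @^-1` A m) `|` ~` (iter k g @^-1` A m)).
  rewrite /E setC_bigcap; apply: eq_bigcupr => k _; exact: setCI.
have hle : (mu (~` E m j) <= (2 * (j.+1)%:R * (1 - pA))%:E)%E.
  set F := fun k => ~` (iter k f @^-1` A m) `|` ~` (iter k g @^-1` A m).
  have mF : forall k, (k < j.+1)%N -> measurable (F k : set (torusB R d)).
    by move=> k _; apply: measurableU; apply: measurableC; [exact: mf|exact: mg].
  have B1 := Boole_inequality mu mF.
  have B2 : forall k : 'I_j.+1, true -> (mu (F k) <= ((1 - pA) + (1 - pA))%:E)%E.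
    move=> k _; have := measureU2 mu (measurableC (mf k m)) (measurableC (mg k m)).
    have e1 : (mu (~` iter k f @^-1` A m) + mu (~` iter k g @^-1` A m) =
      ((1 - pA) + (1 - pA))%:E)%E by rewrite mCf mCg EFinD.
    move=> H; apply: (le_trans H).
    by rewrite le_eqVlt; apply/orP; left; apply/eqP; exact: e1.
  rewrite hC bigcup_mkord; apply: (le_trans B1).
  apply: (@le_trans _ _ (\sum_(i < j.+1) ((1 - pA) + (1 - pA))%:E)%E).
    by apply: lee_sum => k _; exact: B2.
  rewrite sumEFin sumr_const card_ord lee_fin -[in X in X <= _]mulr_natr.
  by rewrite le_eqVlt; apply/orP; left; apply/eqP; ring.
have [hE _] := mu_fin _ (E_meas m j).
move: hle; rewrite probability_setC; last exact: E_meas.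
rewrite hE -EFinB !lee_fin.
set t := 2 * _ * _; lra.
Qed.


Lemma E_iff m j x : E m j x <->
  forall l : int, - (j%:Z) <= l <= j%:Z -> A m (iterz f g l x).
Proof.
split.
- move=> H [n|n] /andP[h1 h2].
  + have nj : (n < j.+1)%N by move: h2; rewrite lez_nat.
    by have [Hf _] := H n nj.
  + have nj : (n.+1 < j.+1)%N by move: h1; rewrite NegzE lerN2 lez_nat.
    by have [_ Hg] := H n.+1 nj.
- move=> H k /= hk; split.
  + have hk' : - (j%:Z) <= k%:Z <= j%:Z by apply/andP; split; lia.
    exact: (H k%:Z hk').
  + case: k hk => [|n] hk.
    * have h0 : - (j%:Z) <= 0 <= j%:Z by apply/andP; split; lia.
      exact: (H 0 h0).
    * have h0 : - (j%:Z) <= Negz n <= j%:Z by rewrite NegzE; apply/andP; split; lia.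
      exact: (H _ h0).
Qed.

Variable eps : R.
Definition B m := \bigcup_(j in [set j : nat | eps / (1 - fine (mu (A m))) <= j%:R])
  E m j.

Lemma B_meas m : measurable (B m : set (torusB R d)).
Proof. by apply: bigcup_measurable => j _; exact: E_meas. Qed.

Lemma Peps_eq : Peps f g mu A eps = lim_sup_set B.
Proof.
apply/seteqP; split => x.
- move=> [ms [hms hx]] n _.
  have ms_ge : forall i, (i <= ms i)%N.
    elim=> [|i IH] //; exact: leq_ltn_trans IH (hms i).
  exists (ms n); first exact: ms_ge.
  have [j [hj hl]] := hx n; exists j => //; exact/E_iff.
- move=> hx.
  have : forall n, exists k, (n <= k)%N /\ B k x.
    by move=> n; have [k kn Bk] := hx n I; exists k.
  move/choice => [h hh].
  pose ms i := iter i (fun k => h k.+1) (h 0%N).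
  exists ms; split.
    by move=> i; rewrite /ms /=; exact: (hh _).1.
  have hB : forall i, B (ms i) x by case=> [|i]; exact: (hh _).2.
  move=> i; have [j hj Ej] := hB i; exists j; split => //; exact/E_iff.
Qed.

End Main.


Lemma Amono (T : Type) (A : nat -> set T) : (forall m, A m `<=` A m.+1) ->
  forall m m', (m <= m')%N -> A m `<=` A m'.
Proof.
move=> hA m m' le; rewrite -(subnKC le); elim: (m' - m)%N => [|k IH].
  by rewrite addn0.
by rewrite addnS; apply: subset_trans IH (hA _).
Qed.

Theorem lemma4p4 (R : realType) (d : nat) (f g : torus R d -> torus R d)
  (mu : probability (torusB R d) R) (A : nat -> set (torus R d)) (eps : R) :
  torus_diffeo f g ->
  invariant_measure f mu ->
  ergodic f mu ->
  (forall m, torus_open (A m)) ->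
  (forall m, A m `<=` A m.+1) ->
  f @` (\bigcup_m A m) = \bigcup_m A m ->
  mu (\bigcup_m A m) = 1%E ->
  (forall m, (mu (A m) < 1)%E) ->
  0 < eps ->
  ((1 - 4 * eps)%:E <= mu (Peps f g mu A eps))%E.
Proof.
move=> [fK [gK [hfC hgC]]] hinv _ hA hmono _ hU hlt eps0.
have mB := B_meas R d f g mu A hfC hgC hA eps.
have mA : forall m, measurable (A m : set (torusB R d)) by move=> m; exact: open_meas.
have [m0 hm0] : exists m0, ((1 - eps / 2)%:E < mu (A m0))%E.
  apply: contrapT => /forallNP H.
  have cv : (mu \o A) @ \oo --> mu (\bigcup_m A m).
    apply: nondecreasing_cvg_mu => //; first exact: bigcupT_measurable.
    by move=> m m' mm'; apply/subsetPset; exact: Amono.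
  have : (lim ((mu \o A) @ \oo) <= (1 - eps / 2)%:E)%E.
    apply: lime_le; first by apply/cvg_ex; eexists; exact: cv.
    by apply: nearW => m /=; rewrite leNgt; apply/negP; exact: H.
  rewrite (cvg_lim (@ereal_hausdorff R) cv) hU lee_fin; lra.
have fin : (mu (\bigcup_(k >= 0) B R d f g mu A eps k) < +oo)%E.
  apply: le_lt_trans (probability_le1 mu _) (ltry _).
  exact: bigcup_measurable.
have cv := lim_sup_set_cvg mu _ mB fin.
rewrite (Peps_eq R d f g mu A eps) -(cvg_lim (@ereal_hausdorff R) cv).
apply: lime_ge; first by apply/cvg_ex; eexists; exact: cv.
apply: nearW => n.
set m := maxn n m0.
have [hA1 _] := mu_fin R d mu _ (mA m).
set pA := fine (mu (A m)) in hA1 *.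
have pA1 : pA < 1 by rewrite -lte_fin -hA1; exact: hlt.
have pA2 : 1 - eps / 2 <= pA.
  rewrite -lee_fin -hA1; apply: (le_trans (ltW hm0)).
  apply: le_measure; rewrite ?inE; [exact: mA | exact: mA |].
  apply: Amono => //; exact: leq_maxr.
set a := 1 - pA.
have a0 : 0 < a by rewrite /a; lra.
set c := eps / a.
have c0 : 0 <= c by rewrite /c divr_ge0 // ltW.
have ca : c * a = eps by rewrite /c mulrVK //; exact: unitf_gt0.
set j := (Num.truncn c).+1.
have hj1 : c <= j%:R by rewrite /j; exact/ltW/truncnS_gt.
have hj2 : j%:R <= c + 1 by rewrite /j -natr1 lerD2r truncn_le.
have h1 := muE_ge R d f g mu A hfC hgC fK hinv hA m j.
have h2 : (mu (E R d f g A m j) <= mu (\bigcup_(k >= n) B R d f g mu A eps k))%E.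
  apply: le_measure; rewrite ?inE; first exact: (E_meas R d f g A hfC hgC hA m j).
    by apply: bigcup_measurable => k _; exact: mB.
  by move=> x Ex; exists m; [exact: leq_maxl | exists j].
apply: le_trans h2; apply: le_trans h1; rewrite lee_fin.
rewrite -/pA -/a.
have h3 : j.+1%:R * a <= (c + 2) * a.
  by apply: ler_wpM2r; [exact: ltW | rewrite -natr1; lra].
have h4 : (c + 2) * a = eps + 2 * a by rewrite mulrDl ca.
have h5 : 2 * j.+1%:R * a = 2 * (j.+1%:R * a) by rewrite mulrA.
rewrite h5; set t := j.+1%:R * a in h3 *.
rewrite h4 in h3; have ha : a <= eps / 2 by rewrite /a; lra.
lra.
Qed.
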